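(* For all integers $k\ge 3$ and $n\ge 2$, the snake graph $S_{k,n}$ is odd prime.
   Context: All graphs are finite and simple. A graph $G$ of order $N$ is odd prime if there is a bijection $\ell:V(G)\to\{1,3,\ldots,2N-1\}$ with $\gcd(\ell(u),\ell(v))=1$ for every edge $uv$. The snake graph $S_{k,n}$ consists of a path $v_1,v_2,\ldots,v_n$ together with, for each $i=1,\ldots,n-1$, new vertices $w_{i,1},\ldots,w_{i,k-2}$ and the path $v_i,w_{i,1},w_{i,2},\ldots,w_{i,k-2},v_{i+1}$; thus each edge $v_iv_{i+1}$ lies on a $k$-cycle, and $S_{k,n}$ has $(k-1)(n-1)+1$ vertices. *)

(* Defs.v *)
From mathcomp Require Import all_boot.
Set Implicit Arguments. Unset Strict Implicit. Unset Printing Implicit Defensive.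

Definition simple_graph (T : finType) (e : rel T) : Prop :=
  irreflexive e /\ symmetric e.

(* Odd prime labeling: a bijection l : V -> {1,3,...,2N-1} (N = #|V|),
   encoded as a bijection f : V -> 'I_#|V| with l x = 2 * f x + 1,
   such that adjacent vertices receive coprime labels. *)
Definition odd_prime (T : finType) (e : rel T) : Prop :=
  exists f : T -> 'I_#|T|,
    bijective f /\
    forall u v, e u v -> coprime (2 * f u + 1) (2 * f v + 1).

(* Vertices of S_{k,n}: inl i  = v_{i+1}      (0 <= i < n),
                        inr (i, j) = w_{i+1, j+1} (0 <= i < n-1, 0 <= j < k-2). *)
Definition snake_vertex (k n : nat) : finType :=
  ('I_n + ('I_n.-1 * 'I_k.-2))%type.

Definition snake_arc (k n : nat) (x y : snake_vertex k n) : bool :=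
  match x, y with
  | inl a, inl b => b == a.+1 :> nat                     (* v_i v_{i+1} *)
  | inl a, inr (i, j) => (i == a :> nat) && (j == 0 :> nat)   (* v_i w_{i,1} *)
  | inr (i, j), inr (i', j') => (i' == i) && (j' == j.+1 :> nat) (* w_{i,j} w_{i,j+1} *)
  | inr (i, j), inl b => (j == k - 3 :> nat) && (b == i.+1 :> nat) (* w_{i,k-2} v_{i+1} *)
  end.

Definition snake_adj (k n : nat) : rel (snake_vertex k n) :=
  fun x y => snake_arc x y || snake_arc y x.

(* Main.v *)
Require Import Defs.
From mathcomp Require Import all_boot.
From mathcomp Require Import zify.

Lemma cop_step x : coprime (2 * x + 1) (2 * x.+1 + 1).
Proof.
have -> : 2 * x.+1 + 1 = 2 + (2 * x + 1) by lia.
by rewrite /coprime gcdnDr -/(coprime _ _) coprimen2 addn1 /= mul2n odd_double.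
Qed.

Lemma cop_jump a d : coprime (2 * (a * d) + 1) (2 * (a.+1 * d) + 1).
Proof.
have -> : 2 * (a.+1 * d) + 1 = 2 * d + (2 * (a * d) + 1).
  by lia.
rewrite /coprime gcdnDr -/(coprime _ _) coprimeMr coprimen2 addn1 /= mul2n odd_double /=.
rewrite coprime_sym /coprime.
rewrite -addn1 -mul2n mulnA.
by rewrite gcdnMDl gcdn1.
Qed.

Lemma divmod_inj d a b r s : r < d -> s < d -> a * d + r = b * d + s -> a = b /\ r = s.
Proof.
move=> hr hs e.
have d0 : 0 < d by case: d hr {hs e}.
have e1 := congr1 (modn^~ d) e; have e2 := congr1 (divn^~ d) e.
rewrite /= !modnMDl !modn_small // in e1.
rewrite /= !divnMDl // !divn_small // !addn0 in e2.
by [].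
Qed.

Theorem theorem3p2 (k n : nat) : 3 <= k -> 2 <= n -> odd_prime (@snake_adj k n).
Proof.
case: k => [|[|[|m]]] // _ hn.
set d := m.+2.
set T := snake_vertex m.+3 n.
pose g (x : T) : nat := match x with
  | inl a => a * d + 0
  | inr (i, j) => i * d + j.+1 end.
have cardT : #|T| = n + n.-1 * m.+1.
  by rewrite /T /snake_vertex card_sum card_prod !card_ord.
have gB : forall x, g x < #|T|.
  rewrite cardT /g /d => -[a|[i j]].
  - have ha := ltn_ord a. nia.
  - have hi := ltn_ord i; have hj := ltn_ord j. nia.
have step : forall x y, y = x.+1 -> coprime (2 * x + 1) (2 * y + 1).
  by move=> x y ->; exact: cop_step.
have arcP : forall u v : T, snake_arc u v -> coprime (2 * g u + 1) (2 * g v + 1).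
  move=> [a|[i j]] [b|[i' j']] /=.
  - move/eqP=> hb; rewrite !addn0 hb; exact: cop_jump.
  - case/andP=> /eqP hi /eqP hj; apply: step; rewrite hi hj; lia.
  - case/andP=> /eqP hj /eqP hb; apply: step; rewrite hb hj /d; lia.
  - case/andP=> /eqP hi /eqP hj; apply: step; rewrite hi hj; lia.
have hlt : forall j : 'I_m.+1, j.+1 < d by move=> j; rewrite /d ltnS.
have h0 : 0 < d by [].
have ginj : injective g.
  move=> [a|[i j]] [b|[i' j']] /= e.
  - have [] := @divmod_inj _ _ _ _ _ h0 h0 e => h _; congr inl; exact: val_inj.
  - by have [] := @divmod_inj _ _ _ _ _ h0 (hlt _) e.
  - by have [] := @divmod_inj _ _ _ _ _ (hlt _) h0 e.
  - have [] := @divmod_inj _ _ _ _ _ (hlt _) (hlt _) e.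
    by move=> h1 [] h2; congr inr; congr pair; apply: val_inj.
exists (fun x => Ordinal (gB x)); split.
  apply: inj_card_bij; last by rewrite card_ord.
  by move=> x y /(congr1 val) /= /ginj.
move=> u v; rewrite /snake_adj => /orP [h|h]; first exact: arcP.
by rewrite coprime_sym; apply: arcP.
Qed.
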